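(* Let $k$ be a positive integer and $p$ a prime with $p\equiv 3,5,$ or $7\pmod 8$. Then for every non-negative integer $n$, $\mathcal{J}_6(24n+3)\equiv \mathcal{J}_6(3p^{2k}(8n+1))\pmod 2$.
   Context: Let $q=e^{2\pi i\tau}$, $(a;q)_\infty=\prod_{j\ge0}(1-aq^j)$, and $\eta(\tau)=q^{1/24}(q;q)_\infty$. Define $$j_6(\tau)=\left(\frac{\eta(2\tau)\eta(3\tau)^3}{\eta(\tau)\eta(6\tau)^3}\right)^3-3=\frac1q+\sum_{n\ge0}\mathcal{J}_6(n)q^n.$$ *)

(* Defs.v *)
From mathcomp Require Import all_boot all_order all_algebra.
Set Implicit Arguments. Unset Strict Implicit. Unset Printing Implicit Defensive.
Import GRing.Theory Num.Theory.
Local Open Scope ring_scope.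

(* Truncation of (q^a;q^a)_oo = prod_{j>=1} (1 - q^{a j}) : all factors
   with a*j <= N (for a >= 1) are kept, so coefficients of q^m, m <= N,
   agree with those of the infinite product. *)
Definition qpoch_tr (a N : nat) : {poly int} :=
  \prod_(1 <= j < N.+1) (1 - 'X^(a * j)).

(* Truncation of 1/(q^a;q^a)_oo = prod_{j>=1} sum_{i>=0} q^{a j i};
   exact in coefficients of q^m, m <= N. *)
Definition qpoch_inv_tr (a N : nat) : {poly int} :=
  \prod_(1 <= j < N.+1) \sum_(0 <= i < N.+1) 'X^(a * j * i).

(* Truncation (exact up to q^N) of
   P(q) = ( (q^2;q^2)_oo (q^3;q^3)_oo^3 / ((q;q)_oo (q^6;q^6)_oo^3) )^3,
   so that j_6 = q^{-1} P(q) - 3. *)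
Definition P_tr (N : nat) : {poly int} :=
  (qpoch_tr 2 N * qpoch_tr 3 N ^+ 3 * qpoch_inv_tr 1 N * qpoch_inv_tr 6 N ^+ 3) ^+ 3.

Definition Pcoef (m : nat) : int := (P_tr m)`_m.

(* j_6(tau) = 1/q + sum_{n>=0} J6(n) q^n, i.e. J6 n = a(n+1) - 3*[n=0]. *)
Definition J6 (n : nat) : int := Pcoef n.+1 - (if n == 0%N then 3 else 0).

(* Main.v *)
Require Import Defs.
From mathcomp Require Import all_boot all_order all_algebra zify ring.
Set Implicit Arguments. Unset Strict Implicit. Unset Printing Implicit Defensive.
Import GRing.Theory.
Local Open Scope ring_scope.

Notation F := 'F_2.

Lemma F11 : (1 + 1 : F) = 0. Proof. by apply/val_inj. Qed.

Lemma F_add_self (x : F) : x + x = 0.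
Proof. by rewrite -[x]mulr1 -mulrDr F11 mulr0. Qed.

Lemma polyF_add_self (p : {poly F}) : p + p = 0.
Proof. by rewrite -[p]mulr1 -mulrDr -polyC1 -polyCD F11 mulr0. Qed.

Lemma F_sq (x : F) : x * x = x.
Proof. by case: x => [[|[|//]] Hx]; apply/val_inj. Qed.

Lemma sqrD_F (a b : {poly F}) : (a + b) ^+ 2 = a ^+ 2 + b ^+ 2.
Proof. by rewrite sqrrD mulr2n polyF_add_self addr0. Qed.

Lemma poly_sq (p : {poly F}) : p ^+ 2 = p \Po 'X^2.
Proof.
elim/poly_ind: p => [|p c IH]; first by rewrite expr0n /= comp_poly0.
rewrite sqrD_F exprMn IH comp_polyD comp_polyM comp_polyX comp_polyC.
by rewrite -polyC_exp [c ^+ 2]expr2 F_sq.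
Qed.

Lemma comp_sum (I : Type) (r : seq I) (P : pred I) (f : I -> {poly F}) (q : {poly F}) :
  (\sum_(i <- r | P i) f i) \Po q = \sum_(i <- r | P i) (f i \Po q).
Proof. exact: raddf_sum. Qed.
Lemma comp_prod (I : Type) (r : seq I) (P : pred I) (f : I -> {poly F}) (q : {poly F}) :
  (\prod_(i <- r | P i) f i) \Po q = \prod_(i <- r | P i) (f i \Po q).
Proof. exact: rmorph_prod. Qed.

Definition eqN (N : nat) (p q : {poly F}) := forall i, (i < N)%N -> p`_i = q`_i.

Lemma eqN_refl N p : eqN N p p. Proof. by []. Qed.
Lemma eqN_sym N p q : eqN N p q -> eqN N q p.
Proof. by move=> H i Hi; rewrite H. Qed.
Lemma eqN_trans N p q r : eqN N p q -> eqN N q r -> eqN N p r.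
Proof. by move=> H1 H2 i Hi; rewrite H1 // H2. Qed.
Lemma eqN_mono M N p q : (M <= N)%N -> eqN N p q -> eqN M p q.
Proof. by move=> HMN H i Hi; apply: H; apply: leq_trans HMN. Qed.
Lemma eqN_add N p p' q q' : eqN N p p' -> eqN N q q' -> eqN N (p + q) (p' + q').
Proof. by move=> H1 H2 i Hi; rewrite !coefD H1 // H2. Qed.
Lemma eqN_mul N p p' q q' : eqN N p p' -> eqN N q q' -> eqN N (p * q) (p' * q').
Proof.
move=> H1 H2 i Hi; rewrite !coefM; apply: eq_bigr => j _.
have Hj := ltn_ord j; rewrite H1 ?H2 //; lia.
Qed.
Lemma eqN_mull N p q q' : eqN N q q' -> eqN N (p * q) (p * q').
Proof. by apply: eqN_mul. Qed.
Lemma eqN_mulr N p p' q : eqN N p p' -> eqN N (p * q) (p' * q).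
Proof. by move=> H; apply: eqN_mul. Qed.
Lemma eqN_exp N p q n : eqN N p q -> eqN N (p ^+ n) (q ^+ n).
Proof.
move=> H; elim: n => [|n IH]; first by rewrite !expr0.
by rewrite !exprS; apply: eqN_mul.
Qed.

Lemma eqN_comp N k p q : (0 < k)%N -> eqN N p q -> eqN (k * N) (p \Po 'X^k) (q \Po 'X^k).
Proof.
move=> Hk H i Hi; rewrite !coef_comp_poly_Xn //; case: ifP => // Hd.
apply: H; rewrite ltn_divLR // mulnC //.
Qed.

Lemma eqN_cancel N (p q r : {poly F}) : r`_0 = 1 -> eqN N (p * r) (q * r) -> eqN N p q.
Proof.
move=> Hr H.
have Hd : forall i, (i < N)%N -> ((p - q) * r)`_i = 0.
  by move=> i Hi; rewrite mulrBl coefB H // subrr.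
suff: forall i, (i < N)%N -> (p - q)`_i = 0.
  by move=> H0 i Hi; apply/eqP; rewrite -subr_eq0 -coefB H0.
elim/ltn_ind => i IH Hi.
have := Hd i Hi; rewrite coefM big_ord_recr /= subnn Hr mulr1 big1 ?add0r //.
move=> j _; have Hj := ltn_ord j; rewrite IH ?mul0r //; lia.
Qed.

Definition ext (k r : nat) (p : {poly F}) := \poly_(i < size p) p`_(k * i + r).

Lemma coef_ext k r p i : (0 < k)%N -> (ext k r p)`_i = p`_(k * i + r).
Proof.
move=> Hk; rewrite coef_poly; case: ifP => // /negbT; rewrite -leqNgt => Hs.
rewrite nth_default //; apply: leq_trans Hs _; nia.
Qed.

Lemma ext_add k r p q : (0 < k)%N -> ext k r (p + q) = ext k r p + ext k r q.
Proof. by move=> Hk; apply/polyP => i; rewrite coefD !coef_ext // coefD. Qed.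
Lemma ext_C k r c p : (0 < k)%N -> ext k r (c%:P * p) = c%:P * ext k r p.
Proof. by move=> Hk; apply/polyP => i; rewrite coefCM !coef_ext // coefCM. Qed.
Lemma ext_Xn k r p : (0 < k)%N -> (r < k)%N -> ext k r ('X^k * p) = 'X * ext k r p.
Proof.
move=> Hk Hr; apply/polyP => i; rewrite coefXM !coef_ext // coefXnM.
case: i => [|i] /=; first by rewrite muln0 add0n Hr.
rewrite ifF; last by apply/negbTE; rewrite -leqNgt; nia.
congr (p`_ _); nia.
Qed.

Lemma ext_comp_mul k r a b : (0 < k)%N -> (r < k)%N ->
  ext k r ((a \Po 'X^k) * b) = a * ext k r b.
Proof.
move=> Hk Hr; elim/poly_ind: a b => [|a c IH] b.
  rewrite comp_poly0 !mul0r; apply/polyP => i; rewrite coef_ext // !coef0 //.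
rewrite comp_polyD comp_polyM comp_polyX comp_polyC mulrDl ext_add //.
by rewrite -mulrA IH ext_Xn // ext_C // mulrDl mulrA.
Qed.

Lemma ext_comp k r a : (0 < k)%N -> (r < k)%N -> ext k r (a \Po 'X^k) = a * ext k r 1.
Proof. by move=> Hk Hr; rewrite -ext_comp_mul // mulr1. Qed.

Lemma eqN_ext M N k r p q : (0 < k)%N -> (k * N.-1 + r < M)%N -> eqN M p q ->
  eqN N (ext k r p) (ext k r q).
Proof.
move=> Hk HM H i Hi; rewrite !coef_ext //; apply: H; apply: leq_ltn_trans HM.
rewrite leq_add2r leq_mul2l; apply/orP; right; by case: N Hi => //= N; rewrite ltnS.
Qed.

Lemma ext1 k r i : (0 < k)%N -> (ext k r 1)`_i = ((i == 0%N) && (r == 0%N))%:R.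
Proof.
move=> Hk; rewrite coef_ext // coef1 addn_eq0 muln_eq0.
by rewrite (negbTE (lt0n_neq0 Hk)).
Qed.

Definition th (P : pred nat) (c d k K : nat) : {poly F} :=
  \sum_(0 <= x < K | P x) 'X^(k * ((x * x - c) %/ d)).

Lemma coef_th P c d k K e : (th P c d k K)`_e =
  \sum_(0 <= x < K) ((P x) && (k * ((x * x - c) %/ d) == e)%N)%:R.
Proof.
rewrite /th coef_sum big_mkcond; apply: eq_bigr => x _.
by case: (P x); rewrite ?coefXn ?coef0 // eq_sym.
Qed.

Lemma coef_th_mul P1 c1 d1 k1 K1 P2 c2 d2 k2 K2 e :
  (th P1 c1 d1 k1 K1 * th P2 c2 d2 k2 K2)`_e =
  \sum_(0 <= x < K1) \sum_(0 <= y < K2)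
     (P1 x && P2 y && (k1 * ((x * x - c1) %/ d1) + k2 * ((y * y - c2) %/ d2) == e)%N)%:R.
Proof.
rewrite /th big_distrl coef_sum big_mkcond; apply: eq_bigr => x _.
case: (P1 x) => /=; last by rewrite big1.
rewrite big_distrr coef_sum big_mkcond; apply: eq_bigr => y _.
by case: (P2 y); rewrite /= ?mulr0 ?coef0 // -exprD coefXn eq_sym.
Qed.

Lemma th_comp P c d k K m : th P c d k K \Po 'X^m = th P c d (m * k) K.
Proof.
rewrite /th comp_sum; apply: eq_bigr => x _.
by rewrite comp_Xn_poly -exprM mulnA.
Qed.

Lemma sum_uniq K (b : nat -> bool) : (forall x y, b x -> b y -> x = y) ->
  \sum_(0 <= x < K) ((b x)%:R : F) = ([exists x : 'I_K, b x])%:R.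
Proof.
move=> Hu; rewrite big_mkord; case: existsP => [[x0 Hx0]|Hn].
  rewrite (bigD1 x0) //= Hx0 big1 ?addr0 // => y Hy.
  case Hb: (b y) => //; exfalso; move/eqP: Hy; apply; apply: val_inj; exact: Hu.
by apply: big1 => x _; case Hb: (b x) => //; exfalso; apply: Hn; exists x.
Qed.

Definition issq (n : nat) : bool := [exists x : 'I_n.+1, (x * x == n)%N].

Lemma issqP n : reflect (exists x, (x * x = n)%N) (issq n).
Proof.
apply: (iffP existsP) => [[x /eqP Hx]|[x Hx]]; first by exists x.
have Hxn : (x < n.+1)%N by nia.
by exists (Ordinal Hxn); apply/eqP.
Qed.

Lemma sq_mod8 x : odd x -> ((x * x) %% 8 = 1)%N.
Proof.
move=> Hx; rewrite -modnMm.
have : (x %% 8 = 1 \/ x %% 8 = 3 \/ x %% 8 = 5 \/ x %% 8 = 7)%N by lia.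
by case=> [->|[->|[->|->]]].
Qed.

Lemma sq_mod24 x : ((x %% 6 == 1) || (x %% 6 == 5))%N -> ((x * x) %% 24 = 1)%N.
Proof.
move=> Hx; rewrite -modnMm.
have : (x %% 24 = 1 \/ x %% 24 = 5 \/ x %% 24 = 7 \/ x %% 24 = 11 \/
        x %% 24 = 13 \/ x %% 24 = 17 \/ x %% 24 = 19 \/ x %% 24 = 23)%N by lia.
by case=> [->|[->|[->|[->|[->|[->|[->|->]]]]]]].
Qed.

Lemma sq_odd x : odd (x * x) -> odd x.
Proof. by rewrite oddM => /andP[]. Qed.

Lemma sq_mod3 x : ((x * x) %% 3 = 1)%N -> (x %% 3 != 0)%N.
Proof.
rewrite -modnMm; have : (x %% 3 = 0 \/ x %% 3 = 1 \/ x %% 3 = 2)%N by lia.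
by case=> [->|[->|->]].
Qed.

Definition psi k K := th odd 1 8 k K.
Definition pE (x : nat) : bool := ((x %% 6 == 1) || (x %% 6 == 5))%N.
Definition Ee k K := th pE 1 24 k K.

Lemma coef_psi k K e : (0 < k)%N -> (8 * e + 1 < K * K)%N ->
  (psi k K)`_e = ((k %| e)%N && issq (8 * (e %/ k) + 1))%:R.
Proof.
move=> Hk HK; rewrite /psi coef_th sum_uniq; last first.
  move=> x y /andP[Hx /eqP Hex] /andP[Hy /eqP Hey].
  have := sq_mod8 Hx; have := sq_mod8 Hy => H1 H2.
  have H3 : ((x * x - 1) %/ 8 = (y * y - 1) %/ 8)%N.
    by apply/eqP; rewrite -(eqn_pmul2l Hk) Hex Hey.
  have : (x * x = y * y)%N by lia.
  by move=> H; nia.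
congr (_%:R); congr nat_of_bool; apply/idP/idP => [/existsP[x /andP[Hx /eqP Hex]]|/andP[Hd /issqP[z Hz]]].
  have := sq_mod8 Hx => H1; apply/andP; split; first by rewrite -Hex dvdn_mulr.
  apply/issqP; exists x; rewrite -Hex mulKn //; lia.
have Hzo : odd z by apply: sq_odd; rewrite Hz; lia.
have HzK : (z < K)%N.
  have : (8 * (e %/ k) <= 8 * e)%N by rewrite leq_mul2l leq_div.
  by nia.
apply/existsP; exists (Ordinal HzK) => /=; rewrite Hzo /= Hz.
have -> : ((8 * (e %/ k) + 1 - 1) %/ 8 = e %/ k)%N by lia.
by rewrite mulnC divnK.
Qed.

Lemma coef_E k K e : (0 < k)%N -> (24 * e + 1 < K * K)%N ->
  (Ee k K)`_e = ((k %| e)%N && issq (24 * (e %/ k) + 1))%:R.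
Proof.
move=> Hk HK; rewrite /Ee coef_th sum_uniq; last first.
  move=> x y /andP[Hx /eqP Hex] /andP[Hy /eqP Hey].
  have := sq_mod24 Hx; have := sq_mod24 Hy => H1 H2.
  have H3 : ((x * x - 1) %/ 24 = (y * y - 1) %/ 24)%N.
    by apply/eqP; rewrite -(eqn_pmul2l Hk) Hex Hey.
  have : (x * x = y * y)%N by lia.
  by move=> H; nia.
congr (_%:R); congr nat_of_bool; apply/idP/idP => [/existsP[x /andP[Hx /eqP Hex]]|/andP[Hd /issqP[z Hz]]].
  have := sq_mod24 Hx => H1; apply/andP; split; first by rewrite -Hex dvdn_mulr.
  apply/issqP; exists x; rewrite -Hex mulKn //; lia.
have Hzo : odd z by apply: sq_odd; rewrite Hz; lia.
have Hz3 : (z %% 3 != 0)%N by apply: sq_mod3; rewrite Hz; lia.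
have HzE : pE z by rewrite /pE; lia.
have HzK : (z < K)%N.
  have : (24 * (e %/ k) <= 24 * e)%N by rewrite leq_mul2l leq_div.
  by nia.
apply/existsP; exists (Ordinal HzK) => /=; rewrite HzE /= Hz.
have -> : ((24 * (e %/ k) + 1 - 1) %/ 24 = e %/ k)%N by lia.
by rewrite mulnC divnK.
Qed.

Lemma invol_sum (T : finType) (S : pred T) (s : T -> T) :
  (forall t, S t -> S (s t)) -> (forall t, S t -> s (s t) = t) ->
  \sum_(t | S t) (1 : F) = \sum_(t | S t && (s t == t)) 1.
Proof.
move=> HS Hss.
pose s' t := if S t then s t else t.
have Hs's' : cancel s' s'.
  by move=> t; rewrite /s'; case Ht: (S t); [rewrite HS // Hss | rewrite Ht].
have Hinj : injective s' := can_inj Hs's'.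
rewrite (bigID (fun t => s t == t)) /=.
suff -> : \sum_(i | S i && (s i != i)) (1 : F) = 0 by rewrite addr0.
rewrite (bigID (fun t => (enum_rank t < enum_rank (s t))%N)) /=.
rewrite [X in _ + X](reindex_inj Hinj) /=.
rewrite [X in _ + X](eq_bigl (fun t => S t && (s t != t) && (enum_rank t < enum_rank (s t))%N)).
  by rewrite F_add_self.
move=> t; rewrite /s'; case Ht: (S t) => /=; last by rewrite Ht.
rewrite HS // Hss // /=.
case Hst: (s t == t) => /=; first by rewrite eq_sym Hst.
rewrite eq_sym Hst /= -leqNgt leq_eqVlt.
case: eqP => [H|//].
have H' := enum_rank_inj (val_inj H).
by rewrite -H' eqxx in Hst.
Qed.

Lemma sum_uniqT (T : finType) (b : pred T) : (forall t u, b t -> b u -> t = u) ->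
  \sum_t ((b t)%:R : F) = ([exists t, b t])%:R.
Proof.
move=> Hu; case: existsP => [[x0 Hx0]|Hn].
  rewrite (bigD1 x0) //= Hx0 big1 ?addr0 // => y Hy.
  case Hb: (b y) => //; exfalso; move/eqP: Hy; apply; exact: Hu.
by apply: big1 => x _; case Hb: (b x) => //; exfalso; apply: Hn; exists x.
Qed.

Definition pA (x y : nat) := ((x + 3 * y) %/ 2)%N.
Definition pB (x y : nat) := ((x - y + (y - x)) %/ 2)%N.
Definition pC (x y : nat) := ((x - 3 * y + (3 * y - x)) %/ 2)%N.
Definition pD (x y : nat) := ((x + y) %/ 2)%N.
Definition part (x y : nat) : nat * nat :=
  if odd (pA x y) then (pA x y, pB x y) else (pC x y, pD x y).

Lemma part_odd x y : odd x -> odd y -> odd (part x y).1 && odd (part x y).2.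
Proof.
rewrite /part /pA /pB /pC /pD => Hx Hy; case: ifP => /= H; apply/andP; split; lia.
Qed.

Lemma part_norm x y : odd x -> odd y ->
  ((part x y).1 * (part x y).1 + 3 * ((part x y).2 * (part x y).2) = x * x + 3 * (y * y))%N.
Proof.
rewrite /part /pA /pB /pC /pD => Hx Hy; case: ifP => /= H.
  set a := ((x + 3 * y) %/ 2)%N; set b := ((x - y + (y - x)) %/ 2)%N.
  have Ha : (2 * a = x + 3 * y)%N by rewrite /a; lia.
  have [Hxy|Hxy] := leqP y x.
    have Hb : (2 * b + y = x)%N by rewrite /b; lia.
    have Ha' : a = (b + 2 * y)%N by lia.
    rewrite Ha' -Hb; ring.
  have Hb : (2 * b + x = y)%N by rewrite /b; lia.
  have Ha' : a = (2 * x + 3 * b)%N by lia.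
  rewrite Ha' -Hb; ring.
set a := ((x - 3 * y + (3 * y - x)) %/ 2)%N; set b := ((x + y) %/ 2)%N.
have Hb : (2 * b = x + y)%N by rewrite /b; lia.
have [Hxy|Hxy] := leqP (3 * y) x.
  have Ha : (2 * a + 3 * y = x)%N by rewrite /a; lia.
  have Hb' : b = (a + 2 * y)%N by lia.
  rewrite Hb' -Ha; ring.
have Ha : (2 * a + x = 3 * y)%N by rewrite /a; lia.
clearbody a b; clear -Ha Hb; nia.
Qed.

Lemma part_invol x y : odd x -> odd y -> part (part x y).1 (part x y).2 = (x, y).
Proof.
move=> Hx Hy; rewrite /part.
case Hi: (odd (pA x y)) => /=; case: ifP => /= H'; congr pair;
  rewrite /pA /pB /pC /pD in Hi H' *; lia.
Qed.

Lemma part_fix x y : odd x -> odd y -> (part x y == (x, y)) = ((x == y) || (x == 3 * y))%N.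
Proof.
move=> Hx Hy; rewrite /part.
case: ifP => /= H; rewrite /pA /pB /pC /pD in H *; rewrite xpair_eqE; apply/idP/idP; move/orP || move/andP; case;
  move/eqP => H1; try move/eqP => H2; try (apply/orP); try (apply/andP); lia.
Qed.

Lemma part_lt K x y : odd x -> odd y -> (x * x + 3 * (y * y) < K * K)%N ->
  ((part x y).1 < K)%N && ((part x y).2 < K)%N.
Proof.
move=> Hx Hy HK; have := part_norm Hx Hy.
set a := (part x y).1; set b := (part x y).2 => Hn.
apply/andP; split; rewrite ltnNge; apply/negP => Hle; nia.
Qed.

Lemma eis K M : odd M -> (4 * M < K * K)%N ->
  \sum_(0 <= x < K) \sum_(0 <= y < K)
     ((odd x && odd y && (x * x + 3 * (y * y) == 4 * M))%N%:R : F)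
  = (issq M)%:R + (((3 %| M) && issq (M %/ 3))%N)%:R.
Proof.
move=> HM HK.
rewrite big_mkord; under eq_bigr do rewrite big_mkord.
rewrite pair_bigA /=.
pose S (t : 'I_K * 'I_K) := (odd t.1 && odd t.2 && (t.1 * t.1 + 3 * (t.2 * t.2) == 4 * M))%N.
pose sg (t : 'I_K * 'I_K) := (insubd t.1 (part t.1 t.2).1, insubd t.2 (part t.1 t.2).2).
have HSlt : forall t, S t -> ((part t.1 t.2).1 < K)%N && ((part t.1 t.2).2 < K)%N.
  move=> t /andP[/andP[H1 H2] /eqP H3]; apply: part_lt => //; lia.
have Hval : forall t, S t -> (val (sg t).1 = (part t.1 t.2).1) /\ (val (sg t).2 = (part t.1 t.2).2).
  move=> t Ht; have /andP[h1 h2] := HSlt t Ht.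
  by rewrite /sg /= !val_insubd h1 h2.
have HSS : forall t, S t -> S (sg t).
  move=> t Ht; have [v1 v2] := Hval t Ht.
  move: (Ht) => /andP[/andP[H1 H2] /eqP H3].
  rewrite /S v1 v2; have /andP[o1 o2] := part_odd H1 H2.
  by rewrite o1 o2 part_norm // H3 eqxx.
have Hinv : forall t, S t -> sg (sg t) = t.
  move=> t Ht; have [v1 v2] := Hval t Ht.
  have [w1 w2] := Hval _ (HSS t Ht).
  move: (Ht) => /andP[/andP[H1 H2] _].
  have := part_invol H1 H2; rewrite -v1 -v2 => Hp.
  clear H1 H2.
  case: t Ht v1 v2 w1 w2 Hp => t1 t2 Ht v1 v2 w1 w2 Hp /=.
  rewrite [sg (sg _)]surjective_pairing; congr pair; apply: val_inj.
    by rewrite w1 /= Hp.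
  by rewrite w2 /= Hp.
have Hfix : forall t, S t -> (sg t == t) = ((t.1 == t.2 :> nat) || (t.1 == 3 * t.2 :> nat))%N.
  move=> t Ht; have [v1 v2] := Hval t Ht.
  move: (Ht) => /andP[/andP[H1 H2] _].
  rewrite -part_fix //.
  clear H1 H2.
  case: t Ht v1 v2 => t1 t2 Ht v1 v2 /=.
  apply/eqP/eqP => E.
    rewrite E /= in v1 v2.
    by rewrite [part _ _]surjective_pairing -v1 -v2.
  rewrite [sg _]surjective_pairing; congr pair; apply: val_inj.
    by rewrite v1 /= E.
  by rewrite v2 /= E.
transitivity (\sum_(t | S t) (1 : F)).
  rewrite [RHS]big_mkcond; apply: eq_bigr => t _; rewrite /S; by case: ifP.
rewrite (invol_sum HSS Hinv).
transitivity (\sum_t (((S t && (t.1 == t.2 :> nat)) || (S t && (t.1 == 3 * t.2 :> nat)))%N)%:R : F).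
  rewrite big_mkcond; apply: eq_bigr => t _.
  case Ht: (S t) => /=; last by [].
  by rewrite Hfix //; case: (_ || _).
transitivity (\sum_t (((S t && (t.1 == t.2 :> nat)))%N)%:R +
              \sum_t (((S t && (t.1 == 3 * t.2 :> nat)))%N)%:R : F).
  rewrite -big_split; apply: eq_bigr => t _ /=.
  case Ht: (S t) => /=; last by rewrite addr0.
  move: Ht => /andP[/andP[H1 H2] _].
  case: eqP => E1; case: eqP => E2 //=; rewrite ?add0r ?addr0 //.
  exfalso; lia.
congr (_ + _).
  rewrite sum_uniqT; last first.
    move=> [t1 t2] [u1 u2] /andP[/andP[/andP[o1 o2] /eqP n1] /eqP e1]
      /andP[/andP[/andP[o3 o4] /eqP n2] /eqP e2] /=.
    simpl in *.
    rewrite -e1 in n1; rewrite -e2 in n2.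
    have E0 : (t1 * t1 = u1 * u1)%N by lia.
    have E1 : (t1 : nat) = u1 by nia.
    by congr pair; apply: val_inj => //=; rewrite -e1 -e2.
  congr (_%:R); congr nat_of_bool; apply/idP/idP.
    move=> /existsP[[t1 t2] /andP[/andP[/andP[o1 o2] /eqP n1] /eqP e1]].
    simpl in *; apply/issqP; exists t1; nia.
  move=> /issqP[z Hz].
  have Hzo : odd z by apply: sq_odd; rewrite Hz.
  have HzK : (z < K)%N by nia.
  apply/existsP; exists (Ordinal HzK, Ordinal HzK) => /=.
  rewrite /S /= Hzo /= eqxx andbT; apply/eqP; nia.
rewrite sum_uniqT; last first.
  move=> [t1 t2] [u1 u2] /andP[/andP[/andP[o1 o2] /eqP n1] /eqP e1]
    /andP[/andP[/andP[o3 o4] /eqP n2] /eqP e2] /=.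
  simpl in *.
  rewrite e1 in n1; rewrite e2 in n2.
  have E0 : (t2 * t2 = u2 * u2)%N by nia.
  have E1 : (t2 : nat) = u2 by nia.
  by congr pair; apply: val_inj => //=; rewrite ?e1 ?e2 E1.
congr (_%:R); congr nat_of_bool; apply/idP/idP.
  move=> /existsP[[t1 t2] /andP[/andP[/andP[o1 o2] /eqP n1] /eqP e1]].
  simpl in *; apply/andP; split.
    apply/dvdnP; exists (t2 * t2)%N; nia.
  apply/issqP; exists t2; nia.
move=> /andP[/dvdnP[w Hw] /issqP[z Hz]].
have Hz' : (M = 3 * (z * z))%N by rewrite Hw mulnK // in Hz; lia.
have Hzo : odd z by apply: sq_odd; move: HM; rewrite Hz' oddM => /andP[].
have HzK : (3 * z < K)%N by nia.
have HzK' : (z < K)%N by lia.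
apply/existsP; exists (Ordinal HzK, Ordinal HzK') => /=.
rewrite /S /= eqxx andbT Hzo andbT; apply/andP; split.
  by rewrite oddM Hzo.
apply/eqP; nia.
Qed.

Fixpoint tri (n : nat) : nat := if n is m.+1 then (tri m + n)%N else 0%N.
Lemma tri2 n : (2 * tri n = n * n.+1)%N.
Proof. elim: n => [|n IH] //=; nia. Qed.

Definition Dk (k N : nat) : {poly F} := \prod_(1 <= j < N.+1) (1 + 'X^(k * j)).

Definition u (n k : nat) : {poly F} :=
  'X^(n * k + tri k) * \prod_(k.+1 <= i < n.+1) (1 + 'X^i).
Definition Sh (n : nat) : {poly F} := \sum_(0 <= k < n.+1) u n k.

Lemma u_succ n k : (k <= n)%N -> u n.+1 k = 'X^k * (1 + 'X^(n.+1)) * u n k.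
Proof.
move=> Hk; rewrite /u big_nat_recr /=; last by lia.
rewrite mulSn -addnA exprD; ring.
Qed.

Lemma u_pred n j : (j < n)%N -> u n j.+1 * (1 + 'X^(j.+1)) = 'X^(n + j.+1) * u n j.
Proof.
move=> Hj; rewrite /u [in RHS]big_ltn; last by lia.
have -> : (n * j.+1 + tri j.+1 = (n + j.+1) + (n * j + tri j))%N.
  by rewrite /= mulnS; lia.
rewrite exprD; ring.
Qed.

Lemma u_nn n : u n n = 'X^(n * n + tri n).
Proof. by rewrite /u big_geq // mulr1. Qed.

Lemma Sh_step n : Sh n.+1 = Sh n + 'X^(2 * n + 1 + (n * n + tri n)) + 'X^(n.+1 * n.+1 + tri n.+1).
Proof.
rewrite /Sh big_nat_recr //= (u_nn n.+1).
have E1 : \sum_(0 <= k < n.+1) u n.+1 k =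
   \sum_(0 <= k < n.+1) ((1 + 'X^k) * u n k) + \sum_(0 <= k < n.+1) u n k
   + \sum_(0 <= k < n.+1) ('X^(n.+1 + k) * u n k).
  rewrite -!big_split /=; apply: eq_big_nat => k Hk; rewrite u_succ; last by lia.
  have -> : (1 + 'X^k) * u n k + u n k = 'X^k * u n k + (u n k + u n k) by ring.
  by rewrite polyF_add_self addr0 exprD; ring.
have A : \sum_(0 <= k < n.+1) ((1 + 'X^k) * u n k) =
         \sum_(0 <= j < n) ('X^(n.+1 + j) * u n j).
  rewrite big_ltn // expr0 polyF_add_self mul0r add0r big_add1 /=.
  apply: eq_big_nat => j Hj; rewrite mulrC u_pred; last by lia.
  by rewrite addSnnS.
have B : \sum_(0 <= k < n.+1) ('X^(n.+1 + k) * u n k) =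
         \sum_(0 <= j < n) ('X^(n.+1 + j) * u n j) + 'X^(n.+1 + n) * u n n.
  by rewrite big_nat_recr.
rewrite E1 A B u_nn.
set s1 := \sum_(0 <= j < n) _; set s2 := \sum_(0 <= k < n.+1) u n k.
have -> : s1 + s2 + (s1 + 'X^(n.+1 + n) * 'X^(n * n + tri n)) + 'X^(n.+1 * n.+1 + tri n.+1)
  = s2 + 'X^(n.+1 + n) * 'X^(n * n + tri n) + 'X^(n.+1 * n.+1 + tri n.+1) + (s1 + s1) by ring.
rewrite polyF_add_self addr0 -exprD; do 2 congr (_ + _); congr ('X^_); lia.
Qed.

Lemma Ee_step n : Ee 1 (6 * n.+1 + 2) = Ee 1 (6 * n + 2) +
   'X^(2 * n + 1 + (n * n + tri n)) + 'X^(n.+1 * n.+1 + tri n.+1).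
Proof.
rewrite /Ee /th (big_cat_nat (n := (6 * n + 2)%N)) //=; last by lia.
rewrite -addrA; congr (_ + _).
rewrite big_mkcond.
have -> : (6 * n.+1 + 2 = (6 * n + 2) + 6)%N by lia.
set m := (6 * n + 2)%N.
rewrite big_ltn; last by lia.
rewrite big_ltn; last by lia.
rewrite big_ltn; last by lia.
rewrite big_ltn; last by lia.
rewrite big_ltn; last by lia.
rewrite big_ltn; last by lia.
rewrite big_geq; last by lia.
have -> : pE m = false by rewrite /m /pE; lia.
have -> : pE m.+1 = false by rewrite /m /pE; lia.
have -> : pE m.+2 = false by rewrite /m /pE; lia.
have -> : pE m.+3 = true by rewrite /m /pE; lia.
have -> : pE m.+4 = false by rewrite /m /pE; lia.
have -> : pE m.+1.+4 = true by rewrite /m /pE; lia.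
have T := tri2 n.
have -> : (1 * ((m.+3 * m.+3 - 1) %/ 24) = 2 * n + 1 + (n * n + tri n))%N.
  have -> : (m.+3 * m.+3 - 1 = 24 * (2 * n + 1 + (n * n + tri n)))%N by rewrite /m; nia.
  by rewrite mul1n mulKn.
have -> : (1 * ((m.+1.+4 * m.+1.+4 - 1) %/ 24) = n.+1 * n.+1 + (tri n + n.+1))%N.
  have -> : (m.+1.+4 * m.+1.+4 - 1 = 24 * (n.+1 * n.+1 + (tri n + n.+1)))%N by rewrite /m; nia.
  by rewrite mul1n mulKn.
by rewrite /= !add0r addr0.
Qed.

Lemma Sh_Ee n : Sh n = Ee 1 (6 * n + 2).
Proof.
elim: n => [|n IH].
  rewrite /Sh big_nat1 u_nn /Ee /th big_mkcond big_nat_recr // big_nat1 /=.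
  by rewrite add0r.
by rewrite Sh_step Ee_step IH.
Qed.

Lemma eqN_Xn0 M a (p : {poly F}) : (M <= a)%N -> eqN M ('X^a * p) 0.
Proof. move=> Ha i Hi; rewrite coefXnM coef0 ifT //; lia. Qed.

Lemma eqN_sum0 M m n (f : nat -> {poly F}) :
  (forall i, (m <= i < n)%N -> eqN M (f i) 0) -> eqN M (\sum_(m <= i < n) f i) 0.
Proof.
move=> H j Hj; rewrite coef_sum coef0 big_nat big1 // => i Hi.
by rewrite H // coef0.
Qed.

Lemma Euler N : eqN N.+1 (Dk 1 N) (Ee 1 (6 * N + 2)).
Proof.
rewrite -Sh_Ee /Sh big_ltn // /u muln0 add0n expr0 mul1r.
have -> : Dk 1 N = Dk 1 N + 0 by rewrite addr0.
apply: eqN_add.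
  by rewrite /Dk; under eq_bigr do rewrite mul1n.
apply: eqN_sym; apply: eqN_sum0 => i Hi; apply: eqN_Xn0.
case: i Hi => [|i] Hi; first by lia.
rewrite /=; nia.
Qed.


Lemma poly4 (p : {poly F}) : p ^+ 4 = p \Po 'X^4.
Proof.
have E : p ^+ 4 = (p ^+ 2) ^+ 2 by rewrite -exprM.
by rewrite E (poly_sq p) (poly_sq (p \Po _)) -comp_polyA comp_Xn_poly -exprM.
Qed.

Lemma Dk_comp k N : Dk k N = Dk 1 N \Po 'X^k.
Proof.
rewrite /Dk comp_prod; apply: eq_bigr => j _.
by rewrite comp_polyD -polyC1 comp_polyC comp_Xn_poly -exprM mul1n.
Qed.

Lemma psi_comp k m K : psi k K \Po 'X^m = psi (m * k) K.
Proof. exact: th_comp. Qed.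

Lemma Dk0 k N : (0 < k)%N -> (Dk k N)`_0 = 1.
Proof.
move=> Hk; rewrite /Dk; elim: N => [|N IH]; first by rewrite big_geq // coef1.
rewrite big_nat_recr //= coef0M IH mul1r coefD coef1 coefXn.
have -> : (0 == k * N.+1)%N = false by rewrite eq_sym muln_eq0; lia.
by rewrite addr0.
Qed.

Lemma psi0 k K : (0 < k)%N -> (1 < K * K)%N -> (psi k K)`_0 = 1.
Proof.
move=> Hk HK; rewrite coef_psi //.
rewrite dvdn0 div0n muln0 add0n /=.
by have -> : issq 1 by apply/issqP; exists 1%N.
Qed.

Lemma psiE4 N K : (24 * N + 4 <= K * K)%N -> eqN N (psi 1 K * Ee 1 K) (Ee 4 K).
Proof.
move=> HK i Hi; rewrite /psi /Ee coef_th_mul exchange_big_nat /=.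
transitivity (\sum_(0 <= y < K) \sum_(0 <= x < K)
   ((odd y && odd x && (y * y + 3 * (x * x) == 4 * (6 * i + 1)))%N%:R : F)).
  apply: eq_bigr => y _; apply: eq_bigr => x _; congr (_%:R); congr nat_of_bool.
  apply/idP/idP.
    move=> /andP[/andP[Hx Hy] /eqP He].
    have := sq_mod8 Hx; have := sq_mod24 Hy => H1 H2.
    have Hy' : (y %% 6 = 1 \/ y %% 6 = 5)%N.
      by move: Hy; rewrite /pE => /orP[/eqP ->|/eqP ->]; [left|right].
    clear Hy.
    apply/andP; split; first by apply/andP; split; lia.
    apply/eqP; move: H1 H2 He; clear.
    move: (x * x)%N (y * y)%N => X Y H1 H2 He; lia.
  move=> /andP[/andP[Hy Hx] /eqP He].
  have := sq_mod8 Hx => H2.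
  have H3 : ((y * y) %% 3 = 1)%N by lia.
  have := sq_mod3 H3 => H4.
  have Hy' : pE y.
    have : (y %% 6 = 1 \/ y %% 6 = 5)%N by move/eqP: H4 => H4; lia.
    by rewrite /pE => -[->|->].
  have := sq_mod24 Hy' => H1.
  rewrite Hx Hy' /=; apply/eqP; lia.
rewrite eis; last (by lia); last by lia.
have -> : (3 %| 6 * i + 1)%N = false by lia.
rewrite /= addr0 coef_E //; last by lia.
congr (_%:R); congr nat_of_bool; apply/idP/idP.
  move=> /issqP[z Hz].
  have Hzo : odd z by apply: sq_odd; rewrite Hz; lia.
  have := sq_mod8 Hzo => H8.
  apply/andP; split; first by lia.
  by apply/issqP; exists z; lia.
move=> /andP[Hd /issqP[z Hz]]; apply/issqP; exists z; lia.
Qed.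

Lemma psiB N K : (8 * N + 4 <= K * K)%N -> eqN N (psi 1 K * psi 3 K) (psi 4 K + 'X * psi 12 K).
Proof.
move=> HK i Hi; rewrite /psi coef_th_mul.
transitivity (\sum_(0 <= x < K) \sum_(0 <= y < K)
   ((odd x && odd y && (x * x + 3 * (y * y) == 4 * (2 * i + 1)))%N%:R : F)).
  apply: eq_bigr => x _; apply: eq_bigr => y _; congr (_%:R); congr nat_of_bool.
  apply/idP/idP.
    move=> /andP[/andP[Hx Hy] /eqP He].
    have := sq_mod8 Hx; have := sq_mod8 Hy => H1 H2.
    rewrite Hx Hy /=; apply/eqP; lia.
  move=> /andP[/andP[Hx Hy] /eqP He].
  have := sq_mod8 Hx; have := sq_mod8 Hy => H1 H2.
  rewrite Hx Hy /=; apply/eqP; lia.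
rewrite eis; last (by lia); last by lia.
rewrite coefD -/(psi 4 K) -/(psi 12 K) coef_psi //; last by lia.
congr (_ + _).
  congr (_%:R); congr nat_of_bool; apply/idP/idP.
    move=> /issqP[z Hz].
    have Hzo : odd z by apply: sq_odd; rewrite Hz; lia.
    have := sq_mod8 Hzo => H8.
    apply/andP; split; first by lia.
    by apply/issqP; exists z; lia.
  move=> /andP[Hd /issqP[z Hz]]; apply/issqP; exists z; lia.
rewrite coefXM; case: i Hi => [|j] Hj /=.
  by [].
rewrite coef_psi //; last by lia.
congr (_%:R); congr nat_of_bool; apply/idP/idP.
  move=> /andP[Hd /issqP[w Hw]].
  have Hw' : (3 * (w * w) = 2 * j.+1 + 1)%N.
    by move: Hw; rewrite -(divnK Hd) mulnK //; lia.
  have Hwo : odd w by apply: sq_odd; lia.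
  have := sq_mod8 Hwo => H8.
  apply/andP; split; first by lia.
  by apply/issqP; exists w; lia.
move=> /andP[Hd /issqP[w Hw]].
have H12 : (j = 12 * (j %/ 12))%N by lia.
apply/andP; split; first by lia.
by apply/issqP; exists w; lia.
Qed.

Lemma Ee_stab N K : (24 * N + 1 < K * K)%N -> eqN N.+1 (Ee 1 (6 * N + 2)) (Ee 1 K).
Proof.
move=> HK i Hi; rewrite !coef_E //; nia.
Qed.

Lemma D3psi N K : (24 * N + 28 <= K * K)%N -> eqN N.+1 (Dk 1 N ^+ 3) (psi 1 K).
Proof.
move=> HK.
set D := Dk 1 N.
have HD : eqN N.+1 D (Ee 1 K).
  apply: (eqN_trans (@Euler N)); apply: Ee_stab; nia.
have H1 : eqN N.+1 (psi 1 K * D) (D ^+ 3 * D).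
  apply: eqN_trans (eqN_mull _ HD) _.
  apply: eqN_trans (psiE4 _) _; first by lia.
  have E4 : Ee 4 K = Ee 1 K \Po 'X^4 by rewrite /Ee th_comp.
  rewrite E4 -exprSr (poly4 D).
  have := eqN_comp (k := 4) (isT : (0 < 4)%N) (eqN_sym HD) => H.
  by apply: (eqN_mono _ H); lia.
apply: eqN_sym; apply: eqN_cancel H1.
by rewrite /D Dk0.
Qed.

Lemma sq_mod3_0 z : ((z * z) %% 3 = 0 -> z %% 3 = 0)%N.
Proof.
rewrite -modnMm; have : (z %% 3 = 0 \/ z %% 3 = 1 \/ z %% 3 = 2)%N by lia.
by case=> [->|[->|->]].
Qed.

Lemma coef_psi1 K e : (8 * e + 1 < K * K)%N -> (psi 1 K)`_e = (issq (8 * e + 1))%:R.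
Proof. by move=> H; rewrite coef_psi // dvd1n divn1. Qed.

Lemma ext_psi3 M K : (8 * (3 * M + 1) + 1 < K * K)%N ->
  eqN M (ext 3 1 (psi 1 K)) (psi 3 K).
Proof.
move=> HK i Hi; rewrite coef_ext // coef_psi1; last by nia.
rewrite coef_psi //; last by nia.
congr (_%:R); congr nat_of_bool; apply/idP/idP.
  move=> /issqP[z Hz].
  have Hz3 : (z %% 3 = 0)%N by apply: sq_mod3_0; rewrite Hz; lia.
  have [w Hz'] : exists w, (z = 3 * w)%N by exists (z %/ 3)%N; lia.
  have Hw : (9 * (w * w) = 8 * (3 * i + 1) + 1)%N by rewrite -Hz Hz'; ring.
  have Hd : (3 %| i)%N.
    move: Hw; move: (w * w)%N => W Hw; lia.
  rewrite Hd /=; apply/issqP; exists w.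
  move: Hw; move: (w * w)%N => W Hw; lia.
move=> /andP[Hd /issqP[w Hw]]; apply/issqP; exists (3 * w)%N.
have : (3 * w * (3 * w) = 9 * (w * w))%N by ring.
move=> ->; rewrite Hw; move: Hd => /dvdnP[t ->]; rewrite mulnK //; lia.
Qed.

Lemma ext411 : ext 4 1 1 = 0.
Proof. by apply/polyP => i; rewrite ext1 // coef0 andbF. Qed.
Lemma ext41X : ext 4 1 'X = 1.
Proof.
apply/polyP => i; rewrite coef_ext // coefX coef1.
by case: i => [|i] //; rewrite mulnS.
Qed.
Lemma ext201 : ext 2 0 1 = 1.
Proof. by apply/polyP => i; rewrite ext1 // coef1 andbT. Qed.
Lemma ext20X : ext 2 0 'X = 0.
Proof.
apply/polyP => i; rewrite coef_ext // coefX coef0 addn0.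
by case: i => [|i] //; rewrite mulnS.
Qed.

Lemma psi_pow2 K : psi 1 K ^+ 2 = psi 2 K.
Proof. by rewrite poly_sq psi_comp. Qed.
Lemma psi_pow4 K : psi 1 K ^+ 4 = psi 4 K.
Proof. by rewrite poly4 psi_comp. Qed.

Lemma chain m Q K : (24 * (24 * m + 4) + 28 <= K * K)%N ->
  eqN (24 * m + 4).+1 (Q * Dk 3 (24 * m + 4) ^+ 9) (psi 1 K) ->
  Q`_(24 * m + 4) = (issq (8 * m + 1))%:R.
Proof.
move=> HK HQ.
set N := (24 * m + 4)%N in HK HQ *.
set D := Dk 1 N.
set ps := psi 1 K.
have HD3 : eqN N.+1 (D ^+ 3) ps by apply: D3psi.
set G := ext 3 1 Q.
have HG : eqN (8 * m + 2) (ps ^+ 3 * G) (psi 3 K).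
  have e1 : ext 3 1 (Q * Dk 3 N ^+ 9) = D ^+ 9 * G.
    by rewrite Dk_comp -rmorphXn mulrC ext_comp_mul.
  have H1 := eqN_ext (k := 3) (r := 1) (N := (8 * m + 2)%N) isT _ HQ.
  have c0 : (3 * (8 * m + 2).-1 + 1 < N.+1)%N by rewrite addn2 /N /=; lia.
  rewrite e1 in H1; have {}H1 := H1 c0.
  have H2 : eqN (8 * m + 2) (ext 3 1 ps) (psi 3 K) by apply: ext_psi3; nia.
  have H3 := eqN_trans H1 H2.
  apply: eqN_trans H3; apply: eqN_mulr.
  have -> : D ^+ 9 = (D ^+ 3) ^+ 3 by rewrite -exprM.
  apply: eqN_sym; apply: eqN_exp; apply: (eqN_mono _ HD3); rewrite /N; lia.
have HG3 : eqN (8 * m + 2) (psi 4 K * G) (psi 4 K + 'X * psi 12 K).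
  have E : psi 4 K * G = ps * (ps ^+ 3 * G) by rewrite -psi_pow4 -/ps exprS mulrA.
  rewrite E; apply: eqN_trans (eqN_mull _ HG) _.
  apply: psiB; nia.
set H := ext 4 1 G.
have HH : eqN (2 * m + 1) (ps * H) (psi 3 K).
  have c1 : (4 * (2 * m + 1).-1 + 1 < 8 * m + 2)%N by rewrite addn1 /=; lia.
  have := eqN_ext (k := 4) (r := 1) (N := (2 * m + 1)%N) isT c1 HG3.
  have -> : psi 4 K = ps \Po 'X^4 by rewrite psi_comp.
  have -> : psi 12 K = psi 3 K \Po 'X^4 by rewrite psi_comp.
  rewrite ext_comp_mul // ext_add // ext_comp // ext411 mulr0 add0r.
  by rewrite (mulrC 'X) ext_comp_mul // ext41X mulr1.
have HH2 : eqN (2 * m + 1) (psi 4 K * H) (psi 2 K * (psi 4 K + 'X * psi 12 K)).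
  have E : psi 4 K * H = ps ^+ 3 * (ps * H) by rewrite -psi_pow4 -/ps exprSr -mulrA.
  rewrite E; apply: eqN_trans (eqN_mull _ HH) _.
  have E2 : ps ^+ 3 * psi 3 K = psi 2 K * (ps * psi 3 K).
    by rewrite exprSr -mulrA psi_pow2.
  rewrite E2; apply: eqN_mull.
  apply: psiB; nia.
set L := ext 2 0 H.
have HL : eqN (m + 1) (psi 2 K * L) (psi 2 K * ps).
  have c2 : (2 * (m + 1).-1 + 0 < 2 * m + 1)%N by rewrite addn1 /=; lia.
  have := eqN_ext (k := 2) (r := 0) (N := (m + 1)%N) isT c2 HH2.
  have -> : psi 4 K = psi 2 K \Po 'X^2 by rewrite psi_comp.
  rewrite ext_comp_mul //.
  have -> : psi 2 K * (psi 2 K \Po 'X^2 + 'X * psi 12 K) =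
            ((ps * psi 2 K) \Po 'X^2) + ((ps * psi 6 K) \Po 'X^2) * 'X.
    by rewrite !rmorphM /= !psi_comp -/ps; ring.
  rewrite ext_add // !ext_comp // ext_comp_mul // ext201 ext20X mulr0 addr0 mulr1.
  by rewrite [ps * _]mulrC.
have HL2 : eqN (m + 1) L ps.
  apply: (eqN_cancel (r := psi 2 K)); first by apply: psi0; nia.
  by rewrite mulrC [ps * _]mulrC.
have := HL2 m ltac:(lia).
rewrite /L /H /G !coef_ext // coef_psi1; last by nia.
have -> : (3 * (4 * (2 * m + 0) + 1) + 1 = N)%N by rewrite /N; lia.
by [].
Qed.

Notation phi := (map_poly (intr : int -> F)).

Lemma polyF_opp (p : {poly F}) : - p = p.
Proof. by apply/eqP; rewrite eq_sym -addr_eq0 polyF_add_self. Qed.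

Lemma map_qpoch a N : phi (qpoch_tr a N) = Dk a N.
Proof.
rewrite /qpoch_tr /Dk rmorph_prod; apply: eq_bigr => j _.
by rewrite rmorphB rmorph1 rmorphXn /= map_polyX polyF_opp.
Qed.

Definition Iq (a N : nat) : {poly F} := \prod_(1 <= j < N.+1) \sum_(0 <= i < N.+1) 'X^(a * j * i).

Lemma map_inv a N : phi (qpoch_inv_tr a N) = Iq a N.
Proof.
rewrite /qpoch_inv_tr /Iq rmorph_prod; apply: eq_bigr => j _.
by rewrite rmorph_sum; apply: eq_bigr => i _; rewrite rmorphXn /= map_polyX.
Qed.

Lemma geo c n : (1 + 'X^c) * \sum_(0 <= i < n.+1) 'X^(c * i) = 1 + 'X^(c * n.+1) :> {poly F}.
Proof.
elim: n => [|n IH]; first by rewrite big_nat1 muln0 expr0 mulr1 muln1.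
rewrite big_nat_recr //= mulrDr IH.
have -> : 1 + 'X^(c * n.+1) + (1 + 'X^c) * 'X^(c * n.+1) =
          1 + 'X^c * 'X^(c * n.+1) + ('X^(c * n.+1) + 'X^(c * n.+1)) :> {poly F} by ring.
by rewrite polyF_add_self addr0 -exprD -mulnS.
Qed.

Lemma eqN_prod1 M m n (f : nat -> {poly F}) :
  (forall i, (m <= i < n)%N -> eqN M (f i) 1) -> eqN M (\prod_(m <= i < n) f i) 1.
Proof.
move=> H; rewrite big_nat; apply: (big_ind (fun p => eqN M p 1)) => //.
by move=> x y Hx Hy; rewrite -(mulr1 1); apply: eqN_mul.
Qed.

Lemma Iq_inv a N : (0 < a)%N -> eqN N.+1 (Dk a N * Iq a N) 1.
Proof.
move=> Ha; rewrite /Dk /Iq -big_split /=; apply: eqN_prod1 => j Hj.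
rewrite geo => i Hi; rewrite coefD coefXn coef1.
have -> : (i == a * j * N.+1)%N = false by apply/negbTE; rewrite neq_ltn; apply/orP; left; nia.
by rewrite addr0.
Qed.

Lemma coef0_exp (p : {poly F}) n : (p ^+ n)`_0 = p`_0 ^+ n.
Proof.
elim: n => [|n IH]; first by rewrite !expr0 coef1.
by rewrite !exprS coef0M IH.
Qed.

Lemma Dk2 N : Dk 2 N = Dk 1 N ^+ 2.
Proof. by rewrite poly_sq -Dk_comp. Qed.

Lemma Dk6 N : Dk 6 N = Dk 3 N ^+ 2.
Proof.
by rewrite poly_sq (Dk_comp 3) -comp_polyA comp_Xn_poly -exprM -Dk_comp.
Qed.

Lemma Q_link N : eqN N.+1 (phi (P_tr N) * Dk 3 N ^+ 9) (Dk 1 N ^+ 3).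
Proof.
rewrite /P_tr !rmorphXn /= !rmorphM /= !map_qpoch !map_inv.
set D := Dk 1 N; set D3 := Dk 3 N.
set Q := (Dk 2 N * D3 ^+ 3 * Iq 1 N * Iq 6 N ^+ 3) ^+ 3.
have H1 : eqN N.+1 (Q * (D * Dk 6 N ^+ 3) ^+ 3) ((Dk 2 N * D3 ^+ 3) ^+ 3).
  have -> : Q * (D * Dk 6 N ^+ 3) ^+ 3 =
    (Dk 2 N * D3 ^+ 3) ^+ 3 * ((D * Iq 1 N) * (Dk 6 N * Iq 6 N) ^+ 3) ^+ 3 by rewrite /Q; ring.
  rewrite -[X in eqN _ _ X]mulr1; apply: eqN_mull.
  rewrite -(expr1n _ 3); apply: eqN_exp.
  rewrite -(mulr1 1) -{2}(expr1n _ 3); apply: eqN_mul; first exact: Iq_inv.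
  by apply: eqN_exp; apply: Iq_inv.
rewrite Dk6 Dk2 -/D in H1.
apply: (eqN_cancel (r := D ^+ 3 * D3 ^+ 9)).
  by rewrite coef0M !coef0_exp /D /D3 !Dk0 // !expr1n mulr1.
have -> : Q * D3 ^+ 9 * (D ^+ 3 * D3 ^+ 9) = Q * (D * (D3 ^+ 2) ^+ 3) ^+ 3 by ring.
have -> : D ^+ 3 * (D ^+ 3 * D3 ^+ 9) = (D ^+ 2 * D3 ^+ 3) ^+ 3 by ring.
exact: H1.
Qed.

Lemma key m : ((Pcoef (24 * m + 4))%:~R : F) = (issq (8 * m + 1))%:R.
Proof.
have HQ : eqN (24 * m + 4).+1 (phi (P_tr (24 * m + 4)) * Dk 3 (24 * m + 4) ^+ 9)
                 (psi 1 (24 * (24 * m + 4) + 28)).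
  apply: (eqN_trans (@Q_link _)); apply: D3psi; apply: leq_pmulr; lia.
have HK : (24 * (24 * m + 4) + 28 <= (24 * (24 * m + 4) + 28) * (24 * (24 * m + 4) + 28))%N.
  apply: leq_pmulr; lia.
have := @chain m _ _ HK HQ.
by rewrite coef_map.
Qed.

Lemma int2F : ((2%:Z)%:~R : F) = 0.
Proof. by apply/val_inj. Qed.

Lemma modF2_aux (a : int) : (a%:~R : F) = ((a %% 2)%Z)%:~R.
Proof. by rewrite {1}(divz_eq a 2) intrD intrM int2F mulr0 add0r. Qed.

Lemma modF2 (a b : int) : (a%:~R : F) = b%:~R -> (a = b %[mod 2])%Z.
Proof.
rewrite modF2_aux (modF2_aux b) => H.
have Ha0 : (0 <= (a %% 2)%Z)%R by apply: modz_ge0.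
have Ha1 : ((a %% 2)%Z < 2)%R by apply: ltz_pmod.
have Hb0 : (0 <= (b %% 2)%Z)%R by apply: modz_ge0.
have Hb1 : ((b %% 2)%Z < 2)%R by apply: ltz_pmod.
move: H Ha0 Ha1 Hb0 Hb1.
move: (a %% 2)%Z (b %% 2)%Z => ra rb H Ha0 Ha1 Hb0 Hb1.
have : (ra = 0 \/ ra = 1)%R by lia.
have : (rb = 0 \/ rb = 1)%R by lia.
case=> E1; case=> E2; rewrite E1 E2 // in H *.
all: exfalso; move: H => /eqP; rewrite ?intr0 ?intr1.
all: by rewrite ?oner_eq0 // eq_sym oner_eq0.
Qed.

Lemma issq_p2 p y : prime p -> issq (p * p * y) = issq y.
Proof.
move=> Hp; apply/issqP/issqP => [[z Hz]|[w Hw]]; last first.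
  by exists (p * w)%N; rewrite -Hw; ring.
have Hpz : (p %| z)%N.
  have : (p %| z * z)%N by rewrite Hz -mulnA dvdn_mulr.
  by rewrite Euclid_dvdM // orbb.
move: Hpz => /dvdnP[w Hw]; exists w.
have Hp0 : (0 < p * p)%N by rewrite muln_gt0 prime_gt0.
apply/eqP; rewrite -(eqn_pmul2l Hp0) -mulnA -Hz Hw; apply/eqP; ring.
Qed.

Lemma issq_pk p k x : prime p -> issq (p ^ (2 * k) * x) = issq x.
Proof.
move=> Hp; elim: k => [|k IH]; first by rewrite muln0 expn0 mul1n.
by rewrite mulnS expnD (expnS p 1) expn1 -[(p * p * _ * x)%N]mulnA issq_p2.
Qed.

Lemma J6_key n : ((J6 (24 * n + 3))%:~R : F) = (issq (8 * n + 1))%:R.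
Proof.
rewrite /J6 -addnS -key.
have -> : (24 * n + 3 == 0)%N = false by rewrite addn3.
by rewrite subr0.
Qed.

Local Close Scope ring_scope.

Theorem corollary3p7 (k p : nat) :
  (0 < k)%N -> prime p -> (p %% 8 \in [:: 3; 5; 7])%N ->
  forall n : nat,
    (J6 (24 * n + 3) = J6 (3 * p ^ (2 * k) * (8 * n + 1)) %[mod 2])%Z.
Proof.
move=> Hk Hp Hp8 n.
have Hpo : odd p.
  have : (p %% 8 = 3 \/ p %% 8 = 5 \/ p %% 8 = 7)%N.
    by move: Hp8; rewrite !inE => /orP[/eqP ->|/orP[/eqP ->|/eqP ->]]; auto.
  lia.
have Hpp := sq_mod8 Hpo.
have Hx8 : ((p ^ (2 * k) * (8 * n + 1)) %% 8 = 1)%N.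
  rewrite -modnMm mulnC expnM -modnXm Hpp exp1n.
  have -> : ((8 * n + 1) %% 8 = 1)%N by lia.
  by [].
set x := (p ^ (2 * k) * (8 * n + 1))%N in Hx8.
have Ex : (3 * p ^ (2 * k) * (8 * n + 1) = 24 * (x %/ 8) + 3)%N.
  by rewrite -mulnA -/x; lia.
rewrite Ex; apply: modF2; rewrite !J6_key.
have -> : (8 * (x %/ 8) + 1 = x)%N by lia.
by rewrite /x issq_pk.
Qed.
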